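(* Let $U=\{\xi_1,\dots,\xi_p\}\subset\mathbb{R}^k$ be finite, and for $j\in\Lambda=\{1,\dots,m\}$ let $f_j:\mathbb{R}^n\times U\to\mathbb{R}$ be such that $x\mapsto f_j(x,\xi_i)$ is continuously differentiable for each $i\in\bar\Lambda=\{1,\dots,p\}$. Let $\Phi=(\Phi_1,\dots,\Phi_m)$ with $\Phi_j(x)=\max_{i\in\bar\Lambda} f_j(x,\xi_i)$. If $\tilde x\in\mathbb{R}^n$ is a weak Pareto optimal solution for $\Phi$, then $\tilde x$ is a critical point for $\Phi$. Moreover, if in addition $x\mapsto f_j(x,\xi_i)$ is convex for every $i\in\bar\Lambda$ and $j\in\Lambda$, then every critical point for $\Phi$ is a weak Pareto optimal solution for $\Phi$; thus under convexity weak Pareto optimality and criticality are equivalent.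
   Context: For $x\in\mathbb{R}^n$ and $j\in\Lambda$, $I_j(x)=\{i\in\bar\Lambda: f_j(x,\xi_i)=\Phi_j(x)\}$. A point $x^*$ is a critical point for $\Phi$ if there is no $v\in\mathbb{R}^n$ such that $\nabla f_j(x^*,\xi_i)^Tv<0$ for all $j\in\Lambda$ and all $i\in I_j(x^* )$. A point $x^*$ is a weak Pareto optimal solution for $\Phi$ if there is no $x\in\mathbb{R}^n$ with $\Phi_j(x)<\Phi_j(x^* )$ for all $j\in\Lambda$. Gradients are with respect to $x$. *)

(* Defs.v *)
From HB Require Import structures.
From mathcomp Require Import all_boot all_order all_algebra.
From mathcomp Require Import all_classical all_reals all_analysis.
Set Implicit Arguments. Unset Strict Implicit. Unset Printing Implicit Defensive.
Import Order.TTheory GRing.Theory Num.Theory.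
Import numFieldNormedType.Exports.
Local Open Scope ring_scope.

Section Defs.
Variables (R : realType) (n k m p : nat).
Variable (Hp : (0 < p)%N).
Variable (xi : 'I_p -> 'rV[R]_k).
Variable (f : 'I_m -> 'rV[R]_n -> 'rV[R]_k -> R).

(* Phi_j(x) = max_{i} f_j(x, xi_i); the seed of the fold is itself one of
   the terms (index 0), so this is exactly the maximum over the nonempty index set. *)
Definition Phi (j : 'I_m) (x : 'rV[R]_n) : R :=
  \big[Num.max/ f j x (xi (Ordinal Hp))]_(i < p) f j x (xi i).

Definition active (j : 'I_m) (x : 'rV[R]_n) (i : 'I_p) : Prop :=
  f j x (xi i) = Phi j x.

(* grad f_j(x,xi_i)^T v is the differential applied to v *)
Definition critical (x : 'rV[R]_n) : Prop :=
  ~ exists v : 'rV[R]_n, forall (j : 'I_m) (i : 'I_p),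
      active j x i -> 'd (fun y => f j y (xi i)) x v < 0.

Definition weak_pareto (x : 'rV[R]_n) : Prop :=
  ~ exists y : 'rV[R]_n, forall j : 'I_m, Phi j y < Phi j x.
End Defs.

Definition convex_fun (R : realType) (n : nat) (g : 'rV[R]_n -> R) : Prop :=
  forall (x y : 'rV[R]_n) (t : R), 0 <= t -> t <= 1 ->
    g (t *: x + (1 - t) *: y) <= t * g x + (1 - t) * g y.

(* continuously differentiable: differentiable everywhere and the derivative
   is continuous (in finite dimension: continuity of x |-> 'd g x v for each v) *)
Definition C1 (R : realType) (n : nat) (g : 'rV[R]_n -> R) : Prop :=
  (forall x, differentiable g x) /\ (forall v : 'rV[R]_n, continuous (fun x => 'd g x v)).

(* Main.v *)
Require Import Defs.
From mathcomp Require Import all_boot all_order all_algebra.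
From mathcomp Require Import all_classical all_reals all_analysis.
From mathcomp Require Import lra.
Import Order.TTheory GRing.Theory Num.Theory.
Import numFieldNormedType.Exports.
Local Open Scope ring_scope.
Local Open Scope classical_set_scope.

Lemma dir_right (R : realType) (n : nat) (g : 'rV[R]_n -> R) x v :
  differentiable g x ->
  (fun h : R => h^-1 * (g (h *: v + x) - g x)) @ 0^'+ --> 'd g x v.
Proof.
move=> dg.
have D : derivable g x v by exact: diff_derivable.
have H : (fun h : R => h^-1 * (g (h *: v + x) - g x)) @ 0^' --> derive g x v.
  exact: D.
rewrite (deriveE _ dg) in H.
have sub : (0 : R)^'+ `=>` 0^'.
  move=> A; rewrite /dnbhs /at_right /within /=; apply: filterS => y Ay y0.
  by apply: Ay; rewrite gt_eqF.
exact: (cvg_trans (cvg_app _ sub) H).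
Qed.

Arguments dir_right {R n g x} v _.
Lemma cont_right (R : realType) (n : nat) (g : 'rV[R]_n -> R) x v :
  differentiable g x ->
  (fun h : R => g (h *: v + x)) @ 0^'+ --> g x.
Proof.
move=> dg.
have c1 : (fun h : R => h *: v + x) @ 0^'+ --> x.
  rewrite -[X in _ --> X]add0r -[X in _ --> X + _](scale0r v).
  apply: cvgD; last exact: cvg_cst.
  apply: cvgZl. apply: cvg_at_right_filter. exact: cvg_id.
have c2 : g @ x --> g x := differentiable_continuous dg.
exact: (cvg_comp _ _ c1 c2).
Qed.

Arguments cont_right {R n g x} v _.
Theorem lemma4p2 (R : realType) (n k m p : nat) (Hp : (0 < p)%N)
  (xi : 'I_p -> 'rV[R]_k) (f : 'I_m -> 'rV[R]_n -> 'rV[R]_k -> R) :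
  (forall (j : 'I_m) (i : 'I_p), C1 (fun x => f j x (xi i))) ->
  (forall xt : 'rV[R]_n, weak_pareto Hp xi f xt -> critical Hp xi f xt) /\
  ((forall (j : 'I_m) (i : 'I_p), convex_fun (fun x => f j x (xi i))) ->
   forall xs : 'rV[R]_n, critical Hp xi f xs -> weak_pareto Hp xi f xs).
Proof.
move=> HC; split.
- move=> xt WP [v Hv]; apply: WP.
  have ev : forall j i, \forall t \near (0:R)^'+,
      f j (t *: v + xt) (xi i) < Phi Hp xi f j xt.
    move=> j i; have dg := (HC j i).1 xt.
    have [act|nact] := pselect (active Hp xi f j xt i).
    + have := cvgr_lt _ (dir_right v dg) _ (Hv j i act).
      move=> E; near=> t.
      have t0 : 0 < t by near: t; exact: nbhs_right_gt.
      have q0 : t^-1 * (f j (t *: v + xt) (xi i) - f j xt (xi i)) < 0.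
        by near: t; exact: E.
      rewrite -act -subr_lt0. by rewrite pmulr_rlt0 ?invr_gt0 in q0.
    + have lt : f j xt (xi i) < Phi Hp xi f j xt.
        rewrite lt_neqAle; apply/andP; split; first by apply/eqP.
        exact: le_bigmax.
      exact: (cvgr_lt _ (cont_right v dg) _ lt).
  have E : \forall t \near (0:R)^'+, forall j i,
      f j (t *: v + xt) (xi i) < Phi Hp xi f j xt.
    apply: filter_forall => j; apply: filter_forall => i; exact: ev.
  have [t Ht] := filter_ex E.
  exists (t *: v + xt) => j.
  apply: bigmax_lt => //; exact: Ht.
- move=> Cv xs Cr [y Hy]; apply: Cr; exists (y - xs) => j i act.
  set g := fun x => f j x (xi i).
  have dg := (HC j i).1 xs.
  have gyx : g y - g xs < 0.
    rewrite subr_lt0 /g act; apply: le_lt_trans (Hy j); exact: le_bigmax.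
  suff : 'd g xs (y - xs) <= g y - g xs by move=> H; exact: le_lt_trans gyx.
  rewrite leNgt; apply/negP => Hlt.
  have E := cvgr_gt _ (dir_right (y - xs) dg) _ Hlt.
  have E2 : \forall t \near (0:R)^'+, 0 < t /\ t < 1 /\
     g y - g xs < t^-1 * (g (t *: (y - xs) + xs) - g xs).
    near=> t; split; first by near: t; exact: nbhs_right_gt.
    split; first by near: t; exact: nbhs_right_lt ltr01.
    by near: t; exact: E.
  have [t [t0 [t1 Ht]]] := filter_ex E2.
  have cv := Cv j i y xs t (ltW t0) (ltW t1).
  have eq : t *: y + (1 - t) *: xs = t *: (y - xs) + xs.
    by rewrite scalerBl scale1r scalerBr addrA addrAC.
  rewrite eq -/g in cv.
  have D : g (t *: (y - xs) + xs) - g xs <= t * (g y - g xs).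
    rewrite /g; move: cv; rewrite mulrBr mulrBl mul1r => H.
    rewrite lerBlDr; apply: (le_trans H); by rewrite addrA [in X in _ <= X]addrAC.
  have : t^-1 * (g (t *: (y - xs) + xs) - g xs) <= g y - g xs.
    rewrite -[X in _ <= X](mulKf (lt0r_neq0 t0)).
    by apply: ler_wpM2l => //; rewrite invr_ge0 ltW.
  by rewrite leNgt Ht.
Unshelve. all: by end_near.
Qed.
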